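(* (i) Let $W$ be a vector space, $c^1(z,w),\dots,c^r(z,w)$ $W$-valued vertex series, and $h_1,\dots,h_r\in\mathbb K$ with $h_i-h_j\notin\mathbb Z$ for $i\ne j$. If $\sum_{i=1}^rc^i(z,w)(z-w)^{h_i}=0$, then $c^i=0$ for all $i$. (ii) Let $c^1(\check z,\check w),\dots,c^r(\check z,\check w)$ be fields on $V$ and $\check h_1,\dots,\check h_r\in\mathbb K^2$ with $\check h_i-\check h_j\notin\mathbb Z^2$ for $i\ne j$. If $\sum_{i=1}^rc^i(\check z,\check w)(\check z-\check w)^{\check h_i}=0$, then $c^i=0$ for all $i$.
   Context: $\mathbb K$ is a field of characteristic $0$. For a vector space $W$, $W\{z,w\}$ denotes formal sums $\sum_{(n,m)\in\mathbb K^2}a_{n,m}z^{-n-1}w^{-m-1}$; a vertex series is an element of the $\mathbb K[z^{\mathbb K},w^{\mathbb K}]$-submodule generated by the power series $W[[z,w]]$ (finite sums of monomials $z^\alpha w^\beta$ times power series). For $h\in\mathbb K$, $(z-w)^h:=\sum_{i\in\mathbb N}(-1)^i\binom hi z^{h-i}w^i$. With $\check z=(z,\bar z)$, $\check w=(w,\bar w)$ and $\check h=(h,\bar h)$: $(\check z-\check w)^{\check h}:=(z-w)^h(\bar z-\bar w)^{\bar h}$. A field on $V$ is an $\mathrm{End}(V)$-valued formal distribution in $\check z,\check w$ (exponents in $\mathbb K$) whose value on every vector of $V$ is a vertex series. *)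

(* Defs.v *)
From HB Require Import structures.
From mathcomp Require Import all_boot all_order all_algebra.
From Stdlib Require Import ClassicalEpsilon.
Set Implicit Arguments. Unset Strict Implicit. Unset Printing Implicit Defensive.
Import Order.TTheory GRing.Theory Num.Theory.
Local Open Scope ring_scope.

Section Defs.
Variable K : fieldType.

(* ---------- formal series, indexed by exponents ----------
   A formal series in z,w with exponents in K is represented by its
   coefficient function: [f a b] is the coefficient of z^a w^b
   (i.e. a_{n,m} with a = -n-1, b = -m-1 in the paper's indexing). *)

Definition in_shift (alpha a : K) : Prop := exists n : nat, a = alpha + n%:R.

(* "infinite" sum of an eventually-zero family: the value of the
   eventually-stable partial sums (well defined in all uses below, since
   the families are finitely supported there). *)
Definition eventually_stable (W : lmodType K) (u : nat -> W) (v : W) : Prop :=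
  exists N : nat, forall M : nat, (N <= M)%N -> \sum_(i < M) u i = v.

Definition fsum (W : lmodType K) (u : nat -> W) : W :=
  epsilon (inhabits 0) (eventually_stable u).

Definition binomK (h : K) (i : nat) : K :=
  (\prod_(j < i) (h - j%:R)) / (i`!)%:R.

(* z^alpha w^beta times a W-valued power series: exactly the series
   supported in (alpha + N) x (beta + N) *)
Definition shifted_ps2 (W : lmodType K) (alpha beta : K) (g : K -> K -> W) :=
  forall a b, g a b <> 0 -> in_shift alpha a /\ in_shift beta b.

Definition vertex_series2 (W : lmodType K) (f : K -> K -> W) : Prop :=
  exists s : seq (K * K * (K -> K -> W)),
    (forall t, List.In t s -> shifted_ps2 t.1.1 t.1.2 t.2) /\
    (forall a b, f a b = \sum_(t <- s) t.2 a b).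

(* c(z,w) * (z-w)^h, with (z-w)^h = sum_i (-1)^i binom(h,i) z^(h-i) w^i *)
Definition mul_zw (W : lmodType K) (h : K) (c : K -> K -> W) : K -> K -> W :=
  fun a b => fsum (fun i : nat =>
     ((-1) ^+ i * binomK h i) *: c (a - h + i%:R) (b - i%:R)).

(* ---------- part (ii): variables z, zbar, w, wbar ----------
   [f a a' b b'] is the coefficient of z^a zbar^a' w^b wbar^b'. *)

Definition shifted_ps4 (V : lmodType K) (al al' be be' : K)
    (g : K -> K -> K -> K -> V) :=
  forall a a' b b', g a a' b b' <> 0 ->
    [/\ in_shift al a, in_shift al' a', in_shift be b & in_shift be' b'].

Definition vertex_series4 (V : lmodType K) (f : K -> K -> K -> K -> V) : Prop :=
  exists s : seq (K * K * K * K * (K -> K -> K -> K -> V)),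
    (forall t, List.In t s ->
       shifted_ps4 t.1.1.1.1 t.1.1.1.2 t.1.1.2 t.1.2 t.2) /\
    (forall a a' b b', f a a' b b' = \sum_(t <- s) t.2 a a' b b').

Definition is_field (V : lmodType K)
    (c : K -> K -> K -> K -> {linear V -> V}) : Prop :=
  forall v : V, vertex_series4 (fun a a' b b' => c a a' b b' v).

(* (c(zc,wc) (zc - wc)^hc) applied to v, with
   (zc-wc)^hc = (z-w)^h (zbar-wbar)^hbar *)
Definition mul_field_at (V : lmodType K) (h hb : K)
    (c : K -> K -> K -> K -> {linear V -> V}) (v : V) : K -> K -> K -> K -> V :=
  fun a a' b b' => fsum (fun i : nat => fsum (fun j : nat =>
     ((-1) ^+ i * binomK h i * ((-1) ^+ j * binomK hb j)) *:
       c (a - h + i%:R) (a' - hb + j%:R) (b - i%:R) (b' - j%:R) v)).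

End Defs.

(* Main.v *)
Require Import Defs.
From HB Require Import structures.
From mathcomp Require Import all_boot all_order all_algebra.
From mathcomp Require Import ring.
From Stdlib Require Import ClassicalEpsilon Classical.
Set Implicit Arguments. Unset Strict Implicit. Unset Printing Implicit Defensive.
Import Order.TTheory GRing.Theory Num.Theory.
Local Open Scope ring_scope.

Section Core.
Variable K : fieldType.
Hypothesis charK0 : [pchar K] =i pred0.

Lemma natK0 n : (n%:R : K) = 0 -> n = 0%N.
Proof. by move=> /eqP; rewrite (pcharf0P K).1 // => /eqP. Qed.

Lemma natK_inj m n : (m%:R : K) = n%:R -> m = n.
Proof.
wlog le_mn : m n / (m <= n)%N.
  by move=> H E; case: (leqP m n) => [/H->|/ltnW /H ->].
move=> E; have : ((n - m)%:R : K) = 0 by rewrite natrB // E subrr.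
by move/natK0 => /eqP; rewrite subn_eq0 => le_nm; apply/eqP; rewrite eqn_leq le_mn.
Qed.

Definition isint (x : K) := exists z : int, x = z%:~R.

Definition G (h : K) (k : nat) : K := (-1) ^+ k * binomK h k.

Lemma G0 (h : K) : G h 0 = 1.
Proof. by rewrite /G /binomK big_ord0 expr0 mul1r fact0 divr1. Qed.

Lemma binomKS (h : K) n : binomK h n.+1 = binomK h n * (h - n%:R) / (n.+1)%:R.
Proof.
rewrite /binomK big_ord_recr /= factS natrM invfM; ring.
Qed.

Lemma GS (h : K) n : (n.+1)%:R * G h n.+1 = (n%:R - h) * G h n.
Proof.
rewrite /G binomKS exprS.
have nz : (n.+1%:R : K) != 0 by apply/eqP => /natK0.
field; by move: nz; rewrite -natr1 addrC.
Qed.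

Section Seq.
Variable W : lmodType K.
Variable J : Type.
Definition conv (u : nat -> K) (q : nat -> J -> W) n x :=
  \sum_(k < n.+1) u k *: q (n - k)%N x.
Definition Tq (q : nat -> J -> W) n x := (n.+1)%:R *: q n.+1 x - n%:R *: q n x.

Lemma conv_T u q n x : (n.+1)%:R *: conv u q n.+1 x - n%:R *: conv u q n x =
  conv (fun k => (k.+1)%:R * u k.+1 - k%:R * u k) q n x + conv u (Tq q) n x.
Proof.
rewrite /conv /Tq.
have eA : \sum_(k < n.+1) ((k.+1)%:R * u k.+1) *: q (n - k)%N x =
          \sum_(k < n.+2) (k%:R * u k) *: q (n.+1 - k)%N x.
  by rewrite [RHS]big_ord_recl /= mul0r scale0r add0r; apply: eq_bigr => k _.
have eB : \sum_(k < n.+1) u k *: ((n - k).+1%:R *: q (n - k).+1 x) =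
          \sum_(k < n.+2) ((n.+1 - k)%:R * u k) *: q (n.+1 - k)%N x.
  rewrite [RHS]big_ord_recr /= subnn mul0r scale0r addr0; apply: eq_bigr => k _.
  by rewrite scalerA mulrC subSn // -ltnS.
have eC : \sum_(k < n.+1) (k%:R * u k) *: q (n - k)%N x +
          \sum_(k < n.+1) u k *: ((n - k)%:R *: q (n - k)%N x) =
          n%:R *: \sum_(k < n.+1) u k *: q (n - k)%N x.
  rewrite -big_split scaler_sumr /=; apply: eq_bigr => k _.
  rewrite [X in _ + X]scalerA [u k * _]mulrC -scalerDl -mulrDl -natrD subnKC //; [by rewrite scalerA | by rewrite -ltnS].
have eAB : \sum_(k < n.+2) (k%:R * u k) *: q (n.+1 - k)%N x +
           \sum_(k < n.+2) ((n.+1 - k)%:R * u k) *: q (n.+1 - k)%N x =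
           n.+1%:R *: \sum_(k < n.+2) u k *: q (n.+1 - k)%N x.
  rewrite -big_split scaler_sumr /=; apply: eq_bigr => k _.
  rewrite -scalerDl -mulrDl -natrD subnKC; [by rewrite scalerA | by rewrite -ltnS].
rewrite -eAB -eA -eB -eC.
have -> : \sum_(k < n.+1) ((k.+1)%:R * u k.+1 - k%:R * u k) *: q (n - k)%N x =
   \sum_(k < n.+1) ((k.+1)%:R * u k.+1) *: q (n - k)%N x -
   \sum_(k < n.+1) (k%:R * u k) *: q (n - k)%N x.
  by rewrite -sumrB; apply: eq_bigr => k _; rewrite scalerBl.
have -> : \sum_(k < n.+1) u k *: ((n - k).+1%:R *: q (n - k).+1 x - (n - k)%:R *: q (n - k)%N x) =
   \sum_(k < n.+1) u k *: ((n - k).+1%:R *: q (n - k).+1 x) -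
   \sum_(k < n.+1) u k *: ((n - k)%:R *: q (n - k)%N x).
  by rewrite -sumrB; apply: eq_bigr => k _; rewrite scalerBr.
by rewrite opprD !addrA; congr (_ - _); rewrite addrAC.
Qed.

Definition V (l : K) (q : nat -> J -> W) n x := Tq q n x + l *: q n x.

Lemma conv_scalel a u q n x : conv (fun k => a * u k) q n x = a *: conv u q n x.
Proof. by rewrite /conv scaler_sumr; apply: eq_bigr => k _; rewrite scalerA. Qed.

Lemma conv_V u l q n x : conv u (V l q) n x = conv u (Tq q) n x + l *: conv u q n x.
Proof.
rewrite /conv /V scaler_sumr -big_split; apply: eq_bigr => k _ /=.
by rewrite scalerDr !scalerA mulrC.
Qed.

Lemma convG_V h c q n x :
  (n.+1)%:R *: conv (G h) q n.+1 x - n%:R *: conv (G h) q n x + c *: conv (G h) q n x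
  = conv (G h) (V (c - h) q) n x.
Proof.
rewrite conv_T conv_V.
have -> : conv (fun k => k.+1%:R * G h k.+1 - k%:R * G h k) q n x = (- h) *: conv (G h) q n x.
  rewrite -conv_scalel /conv; apply: eq_bigr => k _; congr (_ *: _).
  by rewrite GS; ring.
by rewrite scalerBl scaleNr addrAC addrC [- _ + _]addrC.
Qed.

Lemma Ustep (I : finType) (S : {set I}) (h : I -> K) (p : I -> nat -> J -> W) c :
  (forall n x, \sum_(i in S) conv (G (h i)) (p i) n x = 0) ->
  forall n x, \sum_(i in S) conv (G (h i)) (V (c - h i) (p i)) n x = 0.
Proof.
move=> E n x.
under eq_bigr do rewrite -convG_V.
rewrite big_split sumrB /= -!scaler_sumr !E.
by rewrite !scaler0 subrr add0r.
Qed.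


Definition fsupp (q : nat -> J -> W) := exists N, forall n x, (N <= n)%N -> q n x = 0.

Lemma V_pres l q s : (forall n x, (s <= n)%N -> q n x = 0) ->
  forall n x, (s <= n)%N -> V l q n x = 0.
Proof.
move=> H n x le_sn; rewrite /V /Tq !H ?scaler0 ?subrr ?addr0 //.
exact: leqW.
Qed.

Lemma V_red s q : (forall n x, (s.+1 <= n)%N -> q n x = 0) ->
  forall n x, (s <= n)%N -> V s%:R q n x = 0.
Proof.
move=> H n x; rewrite leq_eqVlt => /orP [/eqP <-|lt_sn].
  by rewrite /V /Tq H // scaler0 sub0r addrC subrr.
by rewrite /V /Tq !H ?scaler0 ?subrr ?addr0 // leqW.
Qed.

Lemma V_inj l q : ~ isint l -> fsupp q -> (forall n x, V l q n x = 0) ->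
  forall n x, q n x = 0.
Proof.
move=> nl [N HN] HV.
elim: N HN => [|N IH] HN; first by move=> n x; exact: HN.
apply: IH => n x; rewrite leq_eqVlt => /orP [/eqP <-|lt_Nn]; last exact: HN.
have := HV N x; rewrite /V /Tq HN // scaler0 sub0r -scaleNr -scalerDl.
move/eqP; rewrite scaler_eq0 => /orP [/eqP e|/eqP //].
by case: nl; exists (N%:Z); move: e; rewrite addrC => /eqP; rewrite subr_eq0 => /eqP ->.
Qed.

Lemma conv0 u q n x : (forall n x, q n x = 0) -> conv u q n x = 0.
Proof. by move=> H; rewrite /conv big1 // => k _; rewrite H scaler0. Qed.

Lemma conv_tri h q : (forall n x, conv (G h) q n x = 0) -> forall n x, q n x = 0.
Proof.
move=> H n.
suff: forall m, (m <= n)%N -> forall x, q m x = 0 by apply.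
elim: n => [|n IH] m.
  rewrite leqn0 => /eqP -> x; have := H 0%N x.
  by rewrite /conv big_ord_recl big_ord0 G0 scale1r addr0.
rewrite leq_eqVlt => /orP [/eqP -> x|]; last by rewrite ltnS; exact: IH.
have := H n.+1 x; rewrite /conv big_ord_recl G0 scale1r subn0 big1 ?addr0 //.
by move=> k _; have -> : (n.+1 - lift ord0 k = n - k)%N by []; rewrite IH ?scaler0 // leq_subr.
Qed.

Lemma core1 (I : finType) (h : I -> K) (S : {set I}) (p : I -> nat -> J -> W) :
  (forall i j, i \in S -> j \in S -> i != j -> ~ isint (h i - h j)) ->
  (forall i, i \in S -> fsupp (p i)) ->
  (forall n x, \sum_(i in S) conv (G (h i)) (p i) n x = 0) ->
  forall i, i \in S -> forall n x, p i n x = 0.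
Proof.
move: (leqnn #|S|); move: {2}#|S| => N.
elim: N S p => [|N IH] S p HS Hd Hf E r rS.
  by move: HS; rewrite leqn0 cards_eq0 => /eqP S0; move: rS; rewrite S0 inE.
have [s Hs] := Hf r rS.
have inv : forall t, (t <= s)%N -> exists q : I -> nat -> J -> W,
   [/\ (forall n x, \sum_(i in S) conv (G (h i)) (q i) n x = 0),
       (forall n x, (s - t <= n)%N -> q r n x = 0) &
       (forall j, j \in S -> j != r -> fsupp (q j) /\
          ((forall n x, q j n x = 0) -> forall n x, p j n x = 0))].
  elim => [_|t IHt lt_ts].
    by exists p; split => //; [move=> n x; rewrite subn0; exact: Hs|move=> j jS _; split; auto].
  have [q [Eq Hr Hj]] := IHt (ltnW lt_ts).
  exists (fun j => V (h r + (s - t.+1)%:R - h j) (q j)); split.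
  - exact: Ustep.
  - rewrite addrAC subrr add0r; apply: V_red => n x; rewrite subnSK //; exact: Hr.
  - move=> j jS jr; have [[M HM] Hpj] := Hj j jS jr; split.
      by exists M; apply: V_pres.
    move=> H0; apply: Hpj; apply: (V_inj _ _ H0); last by exists M.
    move=> [z ez]; apply: (Hd j r jS rS jr); exists ((s - t.+1)%:Z - z).
    rewrite rmorphB /= -ez; ring.
have [q [Eq Hr Hj]] := inv s (leqnn s).
have Eq' : forall n x, \sum_(i in S :\ r) conv (G (h i)) (q i) n x = 0.
  move=> n x; have := Eq n x; rewrite (big_setD1 r) //= conv0 ?add0r //.
  by move=> m y; apply: Hr; rewrite subnn.
have Hq : forall j, j \in S :\ r -> forall n x, q j n x = 0.
  apply: (IH (S :\ r)) => //.
  - by move: HS; rewrite (cardsD1 r S) rS.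
  - by move=> i j; rewrite !inE => /andP [_ iS] /andP [_ jS]; apply: Hd.
  - by move=> j; rewrite !inE => /andP [jr jS]; case: (Hj j jS jr).
have Hp : forall j, j \in S :\ r -> forall n x, p j n x = 0.
  move=> j; rewrite !inE => /andP [jr jS]; have [_ H] := Hj j jS jr; apply: H.
  by apply: Hq; rewrite !inE jr.
apply: (conv_tri (h := h r)) => n x; have := E n x.
rewrite (big_setD1 r) //= big1 ?addr0 // => j jS.
by apply: conv0; apply: Hp.
Qed.

End Seq.

Definition isintb (x : K) : bool := if excluded_middle_informative (isint x) then true else false.
Lemma isintbP x : reflect (isint x) (isintb x).
Proof. by rewrite /isintb; case: excluded_middle_informative => H; constructor. Qed.

Lemma isint_nat (n : nat) : isint n%:R.
Proof. by exists n%:Z. Qed.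
Lemma isintB x y : isint x -> isint y -> isint (x - y).
Proof. by move=> [a ->] [b ->]; exists (a - b); rewrite rmorphB. Qed.
Lemma isintD x y : isint x -> isint y -> isint (x + y).
Proof. by move=> [a ->] [b ->]; exists (a + b); rewrite rmorphD. Qed.

Lemma lower_common (I : finType) (S : {set I}) (h : I -> K) r :
  (forall i, i \in S -> isint (h i - h r)) ->
  exists c0, isint (c0 - h r) /\ forall i, i \in S -> exists w : nat, h i = c0 + w%:R.
Proof.
move=> HS.
suff: forall s : seq I, exists c0, isint (c0 - h r) /\
   forall i, i \in s -> i \in S -> exists w : nat, h i = c0 + w%:R.
  by move=> /(_ (enum I)) [c0 [H1 H2]]; exists c0; split=> // i iS; apply: H2; rewrite ?mem_enum.
elim => [|i s [c0 [Hc Hs]]].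
  by exists (h r); split => //; exists 0; rewrite subrr.
case iS: (i \in S); last first.
  exists c0; split => // j; rewrite in_cons => /orP [/eqP ->|js jS]; first by rewrite iS.
  exact: Hs.
have [z ez] : isint (h i - c0).
  have -> : h i - c0 = (h i - h r) - (c0 - h r) by ring.
  by apply: isintB => //; apply: HS.
case: z ez => w ez.
  exists c0; split => // j; rewrite in_cons => /orP [/eqP -> _|js jS]; last exact: Hs.
  by exists w; move: ez; rewrite -pmulrn => ez; rewrite -ez; ring.
exists (h i); split; first exact: HS.
move=> j; rewrite in_cons => /orP [/eqP -> _|js jS]; first by exists 0%N; rewrite addr0.
have [wj ->] := Hs j js jS; exists (wj + w.+1)%N.
move: ez; rewrite NegzE => ez.
have -> : c0 = h i + w.+1%:R by rewrite -[c0](subrK (h i)) -opprB ez /= opprK addrC.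
by rewrite natrD; ring.
Qed.

Lemma ex_bound_fin (I : finType) (P : I -> nat -> Prop) :
  (forall i N M, P i N -> (N <= M)%N -> P i M) -> (forall i, exists N, P i N) ->
  exists N, forall i, P i N.
Proof.
move=> mon ex.
suff: forall s : seq I, exists N, forall i, i \in s -> P i N.
  by move=> /(_ (enum I)) [N HN]; exists N => i; apply: HN; rewrite mem_enum.
elim => [|i s [N HN]]; first by exists 0%N.
have [Ni HNi] := ex i; exists (maxn N Ni) => j; rewrite in_cons => /orP [/eqP ->|js].
  by apply: (mon _ _ _ HNi); rewrite leq_maxr.
by apply: (mon _ _ _ (HN j js)); rewrite leq_maxl.
Qed.


Section Two.
Variable W : lmodType K.
Variable J0 : Type.

Definition unc (P : nat -> nat -> J0 -> W) : nat -> nat * J0 -> W :=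
  fun n y => P n y.1 y.2.
Definition convM (gb : K) (P : nat -> nat -> J0 -> W) n m x :=
  conv (G gb) (fun m' z => P n m' z) m x.
Definition conv2 (g gb : K) (P : nat -> nat -> J0 -> W) n m x :=
  conv (G g) (unc (convM gb P)) n (m, x).
Definition VN (l : K) (P : nat -> nat -> J0 -> W) n m x := V l (unc P) n (m, x).
Definition fs2 (P : nat -> nat -> J0 -> W) :=
  exists N, forall n m x, ((N <= n)%N || (N <= m)%N) -> P n m x = 0.

Lemma VN_conv l gb P n m x :
  V l (unc (convM gb P)) n (m, x) = convM gb (VN l P) n m x.
Proof.
rewrite /V /Tq /unc /convM /VN /V /Tq /unc /conv /=.
rewrite !scaler_sumr -sumrB -big_split /=; apply: eq_bigr => k _.
by rewrite scalerDr scalerBr !scalerA ![_ * G gb k]mulrC.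
Qed.

Lemma Ustep2 (I : finType) (S : {set I}) (h hb : I -> K) (q : I -> nat -> nat -> J0 -> W) c :
  (forall n m x, \sum_(i in S) conv2 (h i) (hb i) (q i) n m x = 0) ->
  forall n m x, \sum_(i in S) conv2 (h i) (hb i) (VN (c - h i) (q i)) n m x = 0.
Proof.
move=> E n m x.
transitivity (\sum_(i in S) conv (G (h i)) (V (c - h i) (unc (convM (hb i) (q i)))) n (m, x)).
  apply: eq_bigr => i _; rewrite /conv2 /conv; apply: eq_bigr => k _.
  by rewrite VN_conv.
by apply: (@Ustep W (nat * J0)) => n' [m' x']; apply: E.
Qed.

Lemma conv2_comm g gb P n m x :
  conv2 g gb P n m x = conv (G gb) (fun m' y => conv (G g) (fun n' z => P n' m' z) y.1 y.2) m (n, x).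
Proof.
rewrite /conv2 /conv /unc /convM /conv /=.
under eq_bigr do rewrite scaler_sumr.
rewrite exchange_big /=; apply: eq_bigr => l _; rewrite scaler_sumr; apply: eq_bigr => k _.
by rewrite !scalerA mulrC.
Qed.

Lemma conv2_0 g gb P n m x : (forall n m x, P n m x = 0) -> conv2 g gb P n m x = 0.
Proof. by move=> H; apply: conv0 => n' y; apply: conv0 => m' z; apply: H. Qed.

Lemma core2 (I : finType) (h hb : I -> K) (S : {set I}) (p : I -> nat -> nat -> J0 -> W) :
  (forall i j, i \in S -> j \in S -> i != j -> ~ (isint (h i - h j) /\ isint (hb i - hb j))) ->
  (forall i, i \in S -> fs2 (p i)) ->
  (forall n m x, \sum_(i in S) conv2 (h i) (hb i) (p i) n m x = 0) ->
  forall i, i \in S -> forall n m x, p i n m x = 0.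
Proof.
move: (leqnn #|S|); move: {2}#|S| => N.
elim: N S p => [|N IH] S p HS Hd Hf E r rS.
  by move: HS; rewrite leqn0 cards_eq0 => /eqP S0; move: rS; rewrite S0 inE.
pose P := fun i => isintb (h i - h r).
pose C := [set j in S | P j].
pose S' := [set j in S | ~~ P j].
have Hsplit : forall F : I -> W, \sum_(i in S) F i = \sum_(i in C) F i + \sum_(i in S') F i.
  move=> F; rewrite (bigID P) /=; congr (_ + _); apply: eq_bigl => i; by rewrite !inE.
have Cint : forall i, i \in C -> isint (h i - h r).
  by move=> i; rewrite inE => /andP [_ /isintbP].
have [c0 [c0r Hc0]] := lower_common Cint.
pose PB := fun i B => i \in C -> exists w : nat, h i = c0 + w%:R /\
   forall n m x, (B - w <= n)%N -> p i n m x = 0.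
have [B HB] : exists B, forall i, PB i B.
  apply: ex_bound_fin.
    move=> i B B' HiB le iC; have [w [ew Hw]] := HiB iC; exists w; split => // n m x le'.
    by apply: Hw; apply: leq_trans le'; apply: leq_sub2r.
  move=> i; rewrite /PB; case iC: (i \in C); last by exists 0%N.
  have [w ew] := Hc0 i iC.
  have iS : i \in S by move: iC; rewrite inE => /andP [].
  have [M HM] := Hf i iS.
  exists (w + M)%N => _; exists w; split => // n m x; rewrite addKn => le.
  by apply: HM; rewrite le.
have inv : forall t, (t <= B)%N -> exists q : I -> nat -> nat -> J0 -> W,
   [/\ (forall n m x, \sum_(i in S) conv2 (h i) (hb i) (q i) n m x = 0),
       (forall i, i \in C -> exists w : nat, h i = c0 + w%:R /\
          forall n m x, (B - t - w <= n)%N -> q i n m x = 0) &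
       (forall j, j \in S' -> fs2 (q j) /\
          ((forall n m x, q j n m x = 0) -> forall n m x, p j n m x = 0))].
  elim => [_|t IHt lt_tB].
    exists p; split => //.
      by move=> i iC; have [w [ew Hw]] := HB i iC; exists w; rewrite subn0.
    move=> j; rewrite inE => /andP [jS _]; split; [exact: Hf|by []].
  have [q [Eq Hq Hj]] := IHt (ltnW lt_tB).
  exists (fun j => VN (c0 + (B - t.+1)%:R - h j) (q j)); split.
  - exact: Ustep2.
  - move=> i iC; have [w [ew Hw]] := Hq i iC; exists w; split => //.
    have eBt : (B - t = (B - t.+1).+1)%N by rewrite subnSK.
    rewrite ew.
    case: (leqP w (B - t.+1)) => [lew|ltw].
      have -> : c0 + (B - t.+1)%:R - (c0 + w%:R) = (B - t.+1 - w)%:R by rewrite (natrB _ lew); ring.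
      move=> n m x le; rewrite /VN; apply: (V_red (s := (B - t.+1 - w)%N)) => //.
      move=> n' [m' x'] le'; apply: Hw; rewrite eBt subSn //.
    move=> n m x _; rewrite /VN; apply: (@V_pres _ _ _ _ 0%N) => //.
    move=> n' [m' x'] _; apply: Hw; rewrite eBt.
    by move: ltw; rewrite -subn_eq0 => /eqP ->.
  - move=> j jS'; have [[M HM] Hpj] := Hj j jS'.
    have nint : ~ isint (c0 + (B - t.+1)%:R - h j).
      move=> Hi; move: jS'; rewrite inE => /andP [_ /isintbP []].
      have -> : h j - h r = (c0 - h r) + (B - t.+1)%:R - (c0 + (B - t.+1)%:R - h j) by ring.
      by apply: isintB => //; apply: isintD => //; apply: isint_nat.
    split.
      exists M => n m x /orP [le|le].
        by rewrite /VN; apply: (@V_pres _ _ _ _ M) => // n' [m' x'] le'; apply: HM; rewrite le'.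
      rewrite /VN /V /Tq /unc /= !HM ?le ?orbT //.
      by rewrite !scaler0 subrr addr0.
    move=> H0; apply: Hpj => n m x.
    change (unc (q j) n (m, x) = 0); apply: (V_inj nint).
      by exists M => n' [m' x'] le; apply: HM; rewrite le.
    by move=> n' [m' x']; apply: H0.
have [q [Eq Hq Hj]] := inv B (leqnn B).
have Eq' : forall n m x, \sum_(i in S') conv2 (h i) (hb i) (q i) n m x = 0.
  move=> n m x; have := Eq n m x; rewrite Hsplit big1 ?add0r // => i iC.
  apply: conv2_0 => n' m' x'; have [w [_ Hw]] := Hq i iC; apply: Hw.
  by rewrite subnn.
have rnS' : r \notin S'.
  by rewrite inE rS /= /P subrr; apply/negPn/isintbP; exists 0.
have Hq' : forall j, j \in S' -> forall n m x, q j n m x = 0.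
  apply: (IH S') => //.
  - have : (#|S'| < #|S|)%N by apply: proper_card; apply/properP; split;
      [apply/subsetP => j; rewrite inE => /andP []|exists r].
    by move=> lt; rewrite -ltnS; apply: leq_trans lt HS.
  - by move=> i j; rewrite !inE => /andP [iS _] /andP [jS _]; apply: Hd.
  - by move=> j jS'; case: (Hj j jS').
have Hp' : forall j, j \in S' -> forall n m x, p j n m x = 0.
  by move=> j jS'; have [_ H] := Hj j jS'; apply: H; apply: Hq'.
have EC : forall n m x, \sum_(i in C) conv2 (h i) (hb i) (p i) n m x = 0.
  move=> n m x; have := E n m x; rewrite Hsplit [X in _ + X]big1 ?addr0 //.
  by move=> j jS'; apply: conv2_0; apply: Hp'.
have rC : r \in C by rewrite inE rS /P subrr; apply/isintbP; exists 0.
have := @core1 W (nat * J0) I hb C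
  (fun i m' y => conv (G (h i)) (fun n' z => p i n' m' z) y.1 y.2).
move=> /(_ _ _ _ r rC) H n m x.
apply: (@conv_tri W J0 (h r) (fun n' z => p r n' m z)) => n' x'.
apply: (H _ _ _ m (n', x')).
- move=> i j iC jC ij Hb; apply: (Hd i j) => //.
    by move: iC; rewrite inE => /andP [].
    by move: jC; rewrite inE => /andP [].
  split => //.
  have -> : h i - h j = (h i - h r) - (h j - h r) by ring.
  by apply: isintB; apply: Cint.
- move=> i iC; have iS : i \in S by move: iC; rewrite inE => /andP [].
  have [M HM] := Hf i iS; exists M => m' [n'' x''] le; apply: conv0 => k z.
  by apply: HM; rewrite le orbT.
- move=> m' [n'' x'']; transitivity (\sum_(i in C) conv2 (h i) (hb i) (p i) n'' m' x''); last exact: EC.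
  by apply: eq_bigr => i _; rewrite conv2_comm.
Qed.

End Two.

Lemma fsum_fin (W : lmodType K) (u : nat -> W) N :
  (forall k, (N <= k)%N -> u k = 0) -> fsum u = \sum_(k < N) u k.
Proof.
move=> H.
have stab : forall M, (N <= M)%N -> \sum_(k < M) u k = \sum_(k < N) u k.
  move=> M le; rewrite -!(big_mkord xpredT) (big_cat_nat (leq0n N) le) /=.
  by rewrite [X in _ + X]big1_seq ?addr0 // => k /andP [_]; rewrite mem_index_iota => /andP [Hk _]; apply: H.
have ex : exists v, eventually_stable u v by exists (\sum_(k < N) u k); exists N.
have [N' HN'] := @epsilon_spec _ (inhabits 0) _ ex.
rewrite /fsum -(HN' (maxn N N')) ?leq_maxr //; apply: stab; exact: leq_maxl.
Qed.

Lemma sum_In0 (W : lmodType K) (T : Type) (s : seq T) (F : T -> W) :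
  (forall t, List.In t s -> F t = 0) -> \sum_(t <- s) F t = 0.
Proof.
elim: s => [|t s IH] H; first by rewrite big_nil.
by rewrite big_cons H /= ?add0r ?IH //; [move=> t' Ht'; apply: H; right|left].
Qed.

Lemma avoid1 (beta x0 : K) : exists N, forall k, (N <= k)%N -> ~ in_shift beta (x0 - k%:R).
Proof.
case: (classic (exists k0 n0 : nat, x0 - k0%:R = beta + n0%:R)) => [[k0 [n0 e0]]|ne].
  exists (k0 + n0).+1 => k le [n e].
  have : ((k + n)%:R : K) = (k0 + n0)%:R.
    rewrite !natrD; apply/eqP; rewrite -subr_eq0; apply/eqP.
    transitivity ((x0 - k0%:R - (beta + n0%:R)) - (x0 - k%:R - (beta + n%:R))); first ring.
    by rewrite e e0 !subrr.
  move/natK_inj => ek; move: le; rewrite -ek ltnNge => /negP; apply; exact: leq_addr.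
by exists 0%N => k _ [n e]; apply: ne; exists k, n.
Qed.

Lemma fin_avoid (T : Type) (s : seq T) (proj : T -> K) x0 :
  exists N, forall k, (N <= k)%N -> forall t, List.In t s -> ~ in_shift (proj t) (x0 - k%:R).
Proof.
elim: s => [|t s [N HN]]; first by exists 0%N.
have [N1 HN1] := avoid1 (proj t) x0.
exists (maxn N N1) => k le t' [<-|Ht'].
  by apply: HN1; apply: leq_trans le; apply: leq_maxr.
by apply: HN => //; apply: leq_trans le; apply: leq_maxl.
Qed.

Lemma vs2_bound (W : lmodType K) (c : K -> K -> W) : vertex_series2 c ->
  forall x0, exists N, forall k, (N <= k)%N -> forall a b,
    (a = x0 - k%:R \/ b = x0 - k%:R) -> c a b = 0.
Proof.
move=> [s [Hs Hc]] x0.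
have [N1 H1] := fin_avoid s (fun t => t.1.1) x0.
have [N2 H2] := fin_avoid s (fun t => t.1.2) x0.
exists (maxn N1 N2) => k le a b Hab; rewrite Hc; apply: sum_In0 => t Ht.
case: (eqVneq (t.2 a b) 0) => // /eqP nz.
have [sa sb] := Hs t Ht a b nz.
case: Hab => [ea|eb]; exfalso.
  by apply: (H1 k _ t Ht); [apply: leq_trans le; apply: leq_maxl|rewrite -ea].
by apply: (H2 k _ t Ht); [apply: leq_trans le; apply: leq_maxr|rewrite -eb].
Qed.

Lemma vs4_bound (W : lmodType K) (c : K -> K -> K -> K -> W) : vertex_series4 c ->
  forall x0, exists N, forall k, (N <= k)%N -> forall a a' b b',
    [\/ a = x0 - k%:R, a' = x0 - k%:R, b = x0 - k%:R | b' = x0 - k%:R] -> c a a' b b' = 0.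
Proof.
move=> [s [Hs Hc]] x0.
have [N1 H1] := fin_avoid s (fun t => t.1.1.1.1) x0.
have [N2 H2] := fin_avoid s (fun t => t.1.1.1.2) x0.
have [N3 H3] := fin_avoid s (fun t => t.1.1.2) x0.
have [N4 H4] := fin_avoid s (fun t => t.1.2) x0.
exists (maxn (maxn N1 N2) (maxn N3 N4)) => k le a a' b b' Hab; rewrite Hc; apply: sum_In0 => t Ht.
case: (eqVneq (t.2 a a' b b') 0) => // /eqP nz.
have [s1 s2 s3 s4] := Hs t Ht a a' b b' nz.
have l1 : (N1 <= k)%N by apply: leq_trans le; rewrite !leq_max leqnn.
have l2 : (N2 <= k)%N by apply: leq_trans le; rewrite !leq_max leqnn !orbT.
have l3 : (N3 <= k)%N by apply: leq_trans le; rewrite !leq_max leqnn !orbT.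
have l4 : (N4 <= k)%N by apply: leq_trans le; rewrite !leq_max leqnn !orbT.
case: Hab => e; exfalso.
- by apply: (H1 k l1 t Ht); rewrite -e.
- by apply: (H2 k l2 t Ht); rewrite -e.
- by apply: (H3 k l3 t Ht); rewrite -e.
- by apply: (H4 k l4 t Ht); rewrite -e.
Qed.

End Core.

Theorem mainTheorem8 (K : fieldType) (charK0 : [pchar K] =i pred0) :
  (* (i) *)
  (forall (W : lmodType K) (r : nat) (c : 'I_r -> K -> K -> W) (h : 'I_r -> K),
     (forall i, vertex_series2 (c i)) ->
     (forall i j, i != j -> ~ exists n : int, h i - h j = n%:~R) ->
     (forall a b, \sum_(i < r) mul_zw (h i) (c i) a b = 0) ->
     forall i a b, c i a b = 0)
  /\
  (* (ii) *)
  (forall (V : lmodType K) (r : nat)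
          (c : 'I_r -> K -> K -> K -> K -> {linear V -> V})
          (h hb : 'I_r -> K),
     (forall i, is_field (c i)) ->
     (forall i j, i != j ->
        ~ exists n m : int, h i - h j = n%:~R /\ hb i - hb j = m%:~R) ->
     (forall (v : V) a a' b b',
        \sum_(i < r) mul_field_at (h i) (hb i) (c i) v a a' b b' = 0) ->
     forall i a a' b b' (v : V), c i a a' b b' v = 0).
Proof.
split.
  move=> W r c h Hvs Hd Heq i0 a0 b0.
  have [Nb HNb] : exists N, forall i k, (N <= k)%N -> forall a b,
      (a = b0 - k%:R \/ b = b0 - k%:R) -> c i a b = 0.
    have := @ex_bound_fin _ (fun i N => forall k, (N <= k)%N -> forall a b,
      (a = b0 - k%:R \/ b = b0 - k%:R) -> c i a b = 0).
    case => [i N M H le k le'|i|N HN]; last by exists N => i; apply: HN.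
      by apply: H; apply: leq_trans le'.
    exact: vs2_bound.
  pose beta0 := b0 - Nb%:R.
  pose e := a0 + b0 + h i0.
  have [Na HNa] : exists N, forall i k, (N <= k)%N -> forall a b,
      (a = (e - h i - beta0) - k%:R \/ b = (e - h i - beta0) - k%:R) -> c i a b = 0.
    have := @ex_bound_fin _ (fun i N => forall k, (N <= k)%N -> forall a b,
      (a = (e - h i - beta0) - k%:R \/ b = (e - h i - beta0) - k%:R) -> c i a b = 0).
    case => [i N M H le k le'|i|N HN]; last by exists N => i; apply: HN.
      by apply: H; apply: leq_trans le'.
    exact: vs2_bound.
  pose p := fun (i : 'I_r) (n : nat) (_ : unit) => c i (e - h i - beta0 - n%:R) (beta0 + n%:R).
  have -> : c i0 a0 b0 = p i0 Nb tt by rewrite /p /e /beta0; congr (c i0 _ _); ring.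
  apply: (@core1 K charK0 W unit _ h setT) => //.
  - by move=> i j _ _; apply: Hd.
  - by move=> i _; exists Na => n x le; apply: (HNa i n le); left.
  move=> n x.
  transitivity (\sum_(i < r) mul_zw (h i) (c i) (e - beta0 - n%:R) (beta0 + n%:R)); last exact: Heq.
  apply: eq_big => [i|i _]; first by rewrite inE.
  rewrite /mul_zw (@fsum_fin K W _ n.+1).
    apply: eq_bigr => k _; rewrite /p /G; congr (_ *: c i _ _).
      by rewrite (natrB _ (leq_ord k)); ring.
    by rewrite (natrB _ (leq_ord k)); ring.
  move=> k le; rewrite (HNb i (Nb + (k - n))%N) ?scaler0 ?leq_addr //; right.
  by rewrite /beta0 natrD natrB; [ring|apply: ltnW].
move=> V r c h hb Hf Hd Heq i0 a0 a0' b0 b0' v.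
have [Nb HNb] : exists N, forall i k, (N <= k)%N -> forall a a' b b',
    [\/ a = b0 - k%:R, a' = b0 - k%:R, b = b0 - k%:R | b' = b0 - k%:R] -> c i a a' b b' v = 0.
  have := @ex_bound_fin _ (fun i N => forall k, (N <= k)%N -> forall a a' b b',
    [\/ a = b0 - k%:R, a' = b0 - k%:R, b = b0 - k%:R | b' = b0 - k%:R] -> c i a a' b b' v = 0).
  case => [i N M H le k le'|i|N HN]; last by exists N => i; apply: HN.
    by apply: H; apply: leq_trans le'.
  exact: (vs4_bound charK0 (Hf i v)).
have [Nb' HNb'] : exists N, forall i k, (N <= k)%N -> forall a a' b b',
    [\/ a = b0' - k%:R, a' = b0' - k%:R, b = b0' - k%:R | b' = b0' - k%:R] -> c i a a' b b' v = 0.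
  have := @ex_bound_fin _ (fun i N => forall k, (N <= k)%N -> forall a a' b b',
    [\/ a = b0' - k%:R, a' = b0' - k%:R, b = b0' - k%:R | b' = b0' - k%:R] -> c i a a' b b' v = 0).
  case => [i N M H le k le'|i|N HN]; last by exists N => i; apply: HN.
    by apply: H; apply: leq_trans le'.
  exact: (vs4_bound charK0 (Hf i v)).
pose beta0 := b0 - Nb%:R.
pose beta0' := b0' - Nb'%:R.
pose e := a0 + b0 + h i0.
pose e' := a0' + b0' + hb i0.
have [Na HNa] : exists N, forall i k, (N <= k)%N -> forall a a' b b',
    [\/ a = (e - h i - beta0) - k%:R, a' = (e - h i - beta0) - k%:R,
        b = (e - h i - beta0) - k%:R | b' = (e - h i - beta0) - k%:R] -> c i a a' b b' v = 0.
  have := @ex_bound_fin _ (fun i N => forall k, (N <= k)%N -> forall a a' b b',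
    [\/ a = (e - h i - beta0) - k%:R, a' = (e - h i - beta0) - k%:R,
        b = (e - h i - beta0) - k%:R | b' = (e - h i - beta0) - k%:R] -> c i a a' b b' v = 0).
  case => [i N M H le k le'|i|N HN]; last by exists N => i; apply: HN.
    by apply: H; apply: leq_trans le'.
  exact: (vs4_bound charK0 (Hf i v)).
have [Na' HNa'] : exists N, forall i k, (N <= k)%N -> forall a a' b b',
    [\/ a = (e' - hb i - beta0') - k%:R, a' = (e' - hb i - beta0') - k%:R,
        b = (e' - hb i - beta0') - k%:R | b' = (e' - hb i - beta0') - k%:R] -> c i a a' b b' v = 0.
  have := @ex_bound_fin _ (fun i N => forall k, (N <= k)%N -> forall a a' b b',
    [\/ a = (e' - hb i - beta0') - k%:R, a' = (e' - hb i - beta0') - k%:R,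
        b = (e' - hb i - beta0') - k%:R | b' = (e' - hb i - beta0') - k%:R] -> c i a a' b b' v = 0).
  case => [i N M H le k le'|i|N HN]; last by exists N => i; apply: HN.
    by apply: H; apply: leq_trans le'.
  exact: (vs4_bound charK0 (Hf i v)).
pose p := fun (i : 'I_r) (n m : nat) (_ : unit) =>
  c i (e - h i - beta0 - n%:R) (e' - hb i - beta0' - m%:R) (beta0 + n%:R) (beta0' + m%:R) v.
have -> : c i0 a0 a0' b0 b0' v = p i0 Nb Nb' tt.
  by rewrite /p /e /e' /beta0 /beta0'; congr (c i0 _ _ _ _ v); ring.
apply: (@core2 K charK0 V unit _ h hb setT) => //.
- move=> i j _ _ ij [[z1 e1] [z2 e2]]; apply: (Hd i j ij); exists z1, z2; split => //.
- move=> i _; exists (maxn Na Na') => n m x /orP [le|le].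
    by apply: (HNa i n); [apply: leq_trans le; apply: leq_maxl|apply: Or41].
  by apply: (HNa' i m); [apply: leq_trans le; apply: leq_maxr|apply: Or42].
move=> n m x.
transitivity (\sum_(i < r) mul_field_at (h i) (hb i) (c i) v (e - beta0 - n%:R) (e' - beta0' - m%:R) (beta0 + n%:R) (beta0' + m%:R)); last exact: Heq.
apply: eq_big => [i|i _]; first by rewrite inE.
rewrite /mul_field_at (@fsum_fin K V _ n.+1); last first.
  move=> k le; rewrite (@fsum_fin K V _ 0) ?big_ord0 // => l _.
  rewrite (HNb i (Nb + (k - n))%N) ?scaler0 ?leq_addr //; apply: Or43.
  by rewrite /beta0 natrD natrB; [ring|apply: ltnW].
rewrite /conv2 /conv; apply: eq_bigr => k _.
rewrite (@fsum_fin K V _ m.+1); last first.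
  move=> l le; rewrite (HNb' i (Nb' + (l - m))%N) ?scaler0 ?leq_addr //; apply: Or44.
  by rewrite /beta0' natrD natrB; [ring|apply: ltnW].
rewrite /unc /convM /conv /= scaler_sumr; apply: eq_bigr => l _.
rewrite scalerA /p /G; congr (_ *: c i _ _ _ _ v).
- by rewrite (natrB _ (leq_ord k)); ring.
- by rewrite (natrB _ (leq_ord l)); ring.
- by rewrite (natrB _ (leq_ord k)); ring.
- by rewrite (natrB _ (leq_ord l)); ring.
Qed.
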